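(* Let $\kappa$ be inaccessible, $\kappa\le\lambda$, let $C$ be a club subset of $P_\kappa\lambda$ (in Jech's sense), and let $f:P_\kappa\lambda\to P_\kappa\lambda$ satisfy $z\subsetneq f(z)\in C$ for every $z\in P_\kappa\lambda$. Then $C_f=\{x\in P_\kappa\lambda: x\cap\kappa\neq\emptyset,\ f[P_{\kappa_x}x]\subseteq P_{\kappa_x}x\}\subseteq C$. In particular every club subset of $P_\kappa\lambda$ belongs to $\mathrm{NSS}^*_{\kappa,\lambda}$.
   Context: $P_\kappa\lambda=\{x\subseteq\lambda:|x|<\kappa\}$, $\kappa_x=|x\cap\kappa|$, $P_\mu x=\{y\subseteq x:|y|<\mu\}$. A Jech club is a subset of $P_\kappa\lambda$ which is unbounded under $\subseteq$ and closed under unions of $\subseteq$-directed subsets of size $<\kappa$. $\mathrm{NSS}^*_{\kappa,\lambda}$ is the filter of sets containing some $C_g$, $g:P_\kappa\lambda\to P_\kappa\lambda$, where $C_g$ is defined as $C_f$ in the claim. *)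

(* Defs.v *)
From Stdlib Require Import Relations Wellfounded.

Set Implicit Arguments.

(* |P| <= |Q| : an injective total relation from P into Q (an injection, under AC). *)
Definition card_le {A B : Type} (P : A -> Prop) (Q : B -> Prop) : Prop :=
  exists R : A -> B -> Prop,
    (forall a, P a -> exists b, Q b /\ R a b) /\
    (forall a a' b, P a -> P a' -> R a b -> R a' b -> a = a').

Definition card_lt {A B : Type} (P : A -> Prop) (Q : B -> Prop) : Prop :=
  card_le P Q /\ ~ card_le Q P.

Definition subset {L : Type} (x y : L -> Prop) : Prop := forall a, x a -> y a.

(* The ordinal lambda is modelled by a type L with a strict well-order lt. *)
Definition strict_well_order {L : Type} (lt : L -> L -> Prop) : Prop :=
  well_founded lt /\
  (forall a b c, lt a b -> lt b c -> lt a c) /\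
  (forall a, ~ lt a a) /\
  (forall a b, lt a b \/ a = b \/ lt b a).

Definition is_cardinal_order {L : Type} (lt : L -> L -> Prop) : Prop :=
  forall b, ~ card_le (fun _ : L => True) (fun a => lt a b).

(* kappa, an ordinal <= lambda, modelled as a downward-closed subset K of L,
   which is an inaccessible cardinal. *)
Definition inaccessible {L : Type} (lt : L -> L -> Prop) (K : L -> Prop) : Prop :=
  (forall a b, lt a b -> K b -> K a) /\
  (forall b, K b -> ~ card_le K (fun a => lt a b)) /\
  card_lt (fun _ : nat => True) K /\
  (* regular: every cofinal subset has size kappa *)
  (forall A : L -> Prop, subset A K ->
     (forall a, K a -> exists b, A b /\ (lt a b \/ a = b)) -> card_le K A) /\
  (forall A : L -> Prop, subset A K -> card_lt A K ->
     card_lt (fun S : L -> Prop => subset S A) K).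

Definition Pkl {L : Type} (K : L -> Prop) (x : L -> Prop) : Prop := card_lt x K.

Definition capK {L : Type} (K : L -> Prop) (x : L -> Prop) : L -> Prop :=
  fun a => x a /\ K a.

(* P_{kappa_x} x, where kappa_x = |x ∩ kappa| *)
Definition Pkx {L : Type} (K : L -> Prop) (x : L -> Prop) (y : L -> Prop) : Prop :=
  subset y x /\ card_lt y (capK K x).

Definition directed {L : Type} (D : (L -> Prop) -> Prop) : Prop :=
  (exists d, D d) /\
  (forall d1 d2, D d1 -> D d2 -> exists d3, D d3 /\ subset d1 d3 /\ subset d2 d3).

Definition bigunion {L : Type} (D : (L -> Prop) -> Prop) : L -> Prop :=
  fun a => exists d, D d /\ d a.

Definition jech_club {L : Type} (K : L -> Prop) (C : (L -> Prop) -> Prop) : Prop :=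
  (forall x, C x -> Pkl K x) /\
  (forall x, Pkl K x -> exists y, C y /\ subset x y) /\
  (forall D : (L -> Prop) -> Prop,
     (forall d, D d -> C d) -> directed D -> card_lt D K -> C (bigunion D)).

Definition Cf {L : Type} (K : L -> Prop) (f : (L -> Prop) -> (L -> Prop))
  (x : L -> Prop) : Prop :=
  Pkl K x /\ (exists a, x a /\ K a) /\
  (forall y, Pkx K x y -> Pkx K x (f y)).

Definition NSSstar {L : Type} (K : L -> Prop) (X : (L -> Prop) -> Prop) : Prop :=
  (forall x, X x -> Pkl K x) /\
  exists g : (L -> Prop) -> (L -> Prop),
    (forall z, Pkl K z -> Pkl K (g z)) /\
    (forall x, Cf K g x -> X x).

(* Main.v *)
Require Import Defs.
From Stdlib Require Import Relations Wellfounded.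
From Stdlib Require Import Classical ClassicalEpsilon FunctionalExtensionality PropExtensionality Lia Arith.

Lemma card_le_trans {A B C : Type} (P : A -> Prop) (Q : B -> Prop) (S : C -> Prop) :
  card_le P Q -> card_le Q S -> card_le P S.
Proof.
  intros [R1 [T1 I1]] [R2 [T2 I2]].
  exists (fun a c => exists b, Q b /\ R1 a b /\ R2 b c). split.
  - intros a Pa. destruct (T1 a Pa) as [b [Qb Rab]]. destruct (T2 b Qb) as [c [Sc Rbc]].
    exists c. split; [exact Sc| exists b; auto].
  - intros a a' c Pa Pa' [b [Qb [Rab Rbc]]] [b' [Qb' [Rab' Rbc']]].
    assert (b = b') by (apply (I2 b b' c); auto). subst b'.
    apply (I1 a a' b); auto.
Qed.

Lemma card_le_sub {A} (P Q : A -> Prop) : (forall a, P a -> Q a) -> card_le P Q.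
Proof. intros H. exists (fun a b => a = b). split.
  - intros a Pa. exists a. auto.
  - intros a a' b _ _ -> ->. reflexivity. Qed.

Lemma php_aux : forall m (R : nat -> nat -> Prop),
  (forall a, a < S m -> exists b, b < m /\ R a b) ->
  (forall a a' b, a < S m -> a' < S m -> R a b -> R a' b -> a = a') -> False.
Proof.
  induction m as [|m IH]; intros R T I.
  - destruct (T 0) as [b [Hb _]]; lia.
  - destruct (T (S m)) as [bs [Hbs Rbs]]; [lia|].
    apply (IH (fun a b => b < m /\ (R a b \/ (R a m /\ b = bs)))).
    + intros a Ha. destruct (T a) as [ba [Hba Rba]]; [lia|].
      assert (ba <> bs).
      { intro; subst. assert (a = S m) by (apply (I a (S m) bs); auto; lia). lia. }
      destruct (Nat.eq_dec ba m).
      * subst. exists bs. split; [lia | split; [lia | right; auto]].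
      * exists ba. split; [lia| split; [lia| left; auto]].
    + intros a a' b Ha Ha' [Hb [H1|[H1 E1]]] [Hb' [H2|[H2 E2]]].
      * apply (I a a' b); auto; lia.
      * subst b. exfalso. assert (a = S m) by (apply (I a (S m) bs); auto; lia). lia.
      * subst b. exfalso. assert (a' = S m) by (apply (I a' (S m) bs); auto; lia). lia.
      * apply (I a a' m); auto; lia.
Qed.

Lemma php (m : nat) : ~ card_le (fun n => n < S m) (fun n => n < m).
Proof. intros [R [T I]]. apply (php_aux m R); auto. Qed.

Lemma wf_least {L} (lt : L -> L -> Prop) : well_founded lt -> forall P : L -> Prop,
  (exists a, P a) -> exists b, P b /\ forall b', P b' -> ~ lt b' b.
Proof.
  intros wf P [a Pa]. apply NNPP. intro Hn.
  assert (H : forall x, ~ P x).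
  { intro x. induction (wf x) as [x _ IH]. intro Px. apply Hn. exists x. split; auto.
    intros b' Pb' Hlt. exact (IH b' Hlt Pb'). }
  exact (H a Pa).
Qed.

Definition hS {L} (lt : L -> L -> Prop) (A B : L -> Prop) (a : L)
  (rec : forall a', lt a' a -> option L) (b : L) : Prop :=
  B b /\ forall a' (H : lt a' a), A a' -> forall b', rec a' H = Some b' -> lt b' b.

Definition hF {L} (lt : L -> L -> Prop) (A B : L -> Prop) (a : L)
  (rec : forall a', lt a' a -> option L) : option L :=
  match excluded_middle_informative
          (exists b, hS lt A B a rec b /\ forall b', hS lt A B a rec b' -> ~ lt b' b) with
  | left e => Some (proj1_sig (constructive_indefinite_description _ e))
  | right _ => None
  end.

Definition hfun {L} (lt : L -> L -> Prop) (wf : well_founded lt) (A B : L -> Prop) : L -> option L :=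
  Fix wf (fun _ => option L) (hF lt A B).

Lemma hfun_eq {L} (lt : L -> L -> Prop) (wf : well_founded lt) (A B : L -> Prop) a :
  hfun lt wf A B a = hF lt A B a (fun a' _ => hfun lt wf A B a').
Proof.
  unfold hfun. apply (Fix_eq wf (fun _ => option L) (hF lt A B)). intros x f g Hfg.
  assert (f = g).
  { apply functional_extensionality_dep; intro y. apply functional_extensionality_dep; intro p. apply Hfg. }
  subst; reflexivity.
Qed.

Lemma h_some {L} (lt : L -> L -> Prop) (wf : well_founded lt) (A B : L -> Prop) a b :
  hfun lt wf A B a = Some b ->
  hS lt A B a (fun a' _ => hfun lt wf A B a') b /\
  forall b', hS lt A B a (fun a' _ => hfun lt wf A B a') b' -> ~ lt b' b.
Proof.
  rewrite hfun_eq. unfold hF. destruct (excluded_middle_informative _) as [e|n]; [|discriminate].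
  intro E; injection E; intro; subst.
  destruct (constructive_indefinite_description _ e) as [x Hx]. simpl. exact Hx.
Qed.

Lemma h_none {L} (lt : L -> L -> Prop) (wf : well_founded lt) (A B : L -> Prop) a :
  hfun lt wf A B a = None -> forall b, ~ hS lt A B a (fun a' _ => hfun lt wf A B a') b.
Proof.
  rewrite hfun_eq. unfold hF. destruct (excluded_middle_informative _) as [e|n]; [discriminate|].
  intros _ b Hb. apply n. apply (wf_least lt wf). exists b; auto.
Qed.

Lemma comparable {L} (lt : L -> L -> Prop) : strict_well_order lt ->
  forall A B : L -> Prop, card_le A B \/ card_le B A.
Proof.
  intros [wf [tr [irr tri]]] A B.
  destruct (classic (exists a0, A a0 /\ hfun lt wf A B a0 = None)) as [[a0 [Aa0 Ha0]]|Hno].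
  - right. exists (fun b a => A a /\ lt a a0 /\ hfun lt wf A B a = Some b). split.
    + intros b Bb.
      assert (Hex : exists a, (A a /\ lt a a0 /\ exists b', hfun lt wf A B a = Some b' /\ ~ lt b' b)).
      { pose proof (h_none lt wf A B a0 Ha0 b) as Hn.
        apply NNPP; intro Hc. apply Hn. split; [exact Bb|]. intros a' H Aa' b' Hb'.
        apply NNPP; intro Hlt. apply Hc. exists a'. split; [exact Aa'|split; [exact H|]]. exists b'. auto. }
      destruct (wf_least lt wf _ Hex) as [a1 [[Aa1 [Ha1 [b1 [Hb1 Hnl]]]] Hmin]].
      destruct (tri b1 b) as [Hl|[Heq|Hl]]; [contradiction| subst; exists a1; auto|].
      exfalso. destruct (h_some lt wf A B a1 b1 Hb1) as [_ Hleast].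
      apply (Hleast b); [|exact Hl]. split; [exact Bb|]. intros a'' H Aa'' b'' Hb''.
      apply NNPP; intro Hnl2.
      apply (Hmin a''); [|exact H]. split; [exact Aa''|split; [apply (tr _ a1); auto | exists b''; auto]].
    + intros b b' a _ _ [_ [_ E1]] [_ [_ E2]]. rewrite E1 in E2. injection E2; auto.
  - left. exists (fun a b => hfun lt wf A B a = Some b). split.
    + intros a Aa. destruct (hfun lt wf A B a) eqn:E.
      * exists l. split; [| reflexivity]. destruct (h_some lt wf A B a l E) as [[Bl _] _]. exact Bl.
      * exfalso; apply Hno; exists a; auto.
    + intros a a' b Aa Aa' E E'. destruct (tri a a') as [Hl|[Heq|Hl]]; auto; exfalso.
      * destruct (h_some lt wf A B a' b E') as [[_ HS] _]. apply (irr b). apply (HS a Hl Aa b E).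
      * destruct (h_some lt wf A B a b E) as [[_ HS] _]. apply (irr b). apply (HS a' Hl Aa' b E').
Qed.

Definition IsSucc {L} (lt : L -> L -> Prop) (A : L -> Prop) (p c : L) : Prop :=
  A p /\ A c /\ lt p c /\ forall z, A z -> lt p z -> c = z \/ lt c z.
Definition IsBase {L} (lt : L -> L -> Prop) (A : L -> Prop) (b : L) : Prop :=
  A b /\ forall p, ~ IsSucc lt A p b.
Inductive Off {L} (lt : L -> L -> Prop) (A : L -> Prop) (b : L) : nat -> L -> Prop :=
| Off0 : IsBase lt A b -> Off lt A b 0 b
| OffS : forall k c c', Off lt A b k c -> IsSucc lt A c c' -> Off lt A b (S k) c'.

Lemma succ_fun {L} lt A (Hw : strict_well_order lt) : forall (p c c' : L),
  IsSucc lt A p c -> IsSucc lt A p c' -> c = c'.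
Proof. destruct Hw as [wf [tr [irr tri]]]. intros p c c' (Ap&Ac&Hpc&Hc) (_&Ac'&Hpc'&Hc').
  destruct (Hc c' Ac' Hpc') as [E|H1]; auto. destruct (Hc' c Ac Hpc) as [E|H2]; auto.
  exfalso; apply (irr c (tr _ _ _ H1 H2)). Qed.

Lemma succ_inj {L} lt A (Hw : strict_well_order lt) : forall (p p' c : L),
  IsSucc lt A p c -> IsSucc lt A p' c -> p = p'.
Proof. destruct Hw as [wf [tr [irr tri]]]. intros p p' c (Ap&Ac&Hpc&Hc) (Ap'&_&Hpc'&Hc').
  destruct (tri p p') as [H|[E|H]]; auto; exfalso.
  - destruct (Hc p' Ap' H) as [E|H1].
    + subst. exact (irr _ Hpc').
    + exact (irr _ (tr _ _ _ H1 Hpc')).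
  - destruct (Hc' p Ap H) as [E|H1].
    + subst. exact (irr _ Hpc).
    + exact (irr _ (tr _ _ _ H1 Hpc)).
Qed.

Lemma off_A {L} lt A : forall (b : L) k c, Off lt A b k c -> A c /\ IsBase lt A b.
Proof. induction 1 as [Hb|k c c' H IH Hs].
  - split; [apply Hb| exact Hb].
  - destruct Hs as (_&Ac'&_). split; [exact Ac' | apply IH]. Qed.

Lemma off_unique {L} lt A (Hw : strict_well_order lt) : forall (b : L) k c, Off lt A b k c ->
  forall b' k', Off lt A b' k' c -> b = b' /\ k = k'.
Proof. induction 1 as [Hb|k c c' H IH Hs]; intros b' k' H'.
  - inversion H'; subst.
    + auto.
    + exfalso. eapply (proj2 Hb); eauto.
  - inversion H'; subst.
    + exfalso. eapply (proj2 H0); eauto.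
    + match goal with Hx : IsSucc lt A ?c0 c' , Hy : Off lt A b' ?k0 ?c0 |- _ =>
        assert (c0 = c) by (eapply succ_inj; eauto); subst; destruct (IH _ _ Hy); split; auto end.
Qed.

Lemma off_func {L} lt A (Hw : strict_well_order lt) : forall (b : L) k c, Off lt A b k c ->
  forall c', Off lt A b k c' -> c = c'.
Proof. induction 1 as [Hb|k c c' H IH Hs]; intros c2 H'.
  - inversion H'; subst; auto.
  - inversion H'; subst.
    match goal with Hx : IsSucc lt A ?c0 c2 , Hy : Off lt A b k ?c0 |- _ =>
      assert (c0 = c) by (symmetry; apply IH; auto); subst; eapply succ_fun; eauto end.
Qed.

Lemma off_down {L} lt A : forall (b : L) k c, Off lt A b k c ->
  forall j, j <= k -> exists c', Off lt A b j c'.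
Proof. induction 1 as [Hb|k c c' H IH Hs]; intros j Hj.
  - assert (j = 0) by lia. subst. exists b. constructor; auto.
  - destruct (Nat.eq_dec j (S k)).
    + subst. exists c'. econstructor; eauto.
    + apply IH. lia.
Qed.

Lemma off_exists {L} lt A (Hw : strict_well_order lt) : forall c : L, A c -> exists b k, Off lt A b k c.
Proof. destruct Hw as [wf [tr [irr tri]]].
  intro c; induction (wf c) as [c _ IH]; intro Ac.
  destruct (classic (exists p, IsSucc lt A p c)) as [[p Hp]|Hn].
  - pose proof Hp as (Ap & _ & Hpc & _). destruct (IH p Hpc Ap) as [b [k Hk]].
    exists b, (S k). econstructor; eauto.
  - exists c, 0. constructor. split; auto. intros p Hp; apply Hn; eauto.
Qed.

Lemma last_max {L} lt A (Hw : strict_well_order lt) : forall (b : L) m c, Off lt A b m c ->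
  ~ (exists c', Off lt A b (S m) c') -> forall z, A z -> ~ lt c z.
Proof. intros b m c Hc Hn z Az Hl. pose proof Hw as [wf [tr [irr tri]]].
  destruct (wf_least lt wf (fun z => A z /\ lt c z)) as [z0 [[Az0 Hcz0] Hmin]]; eauto.
  apply Hn. exists z0. econstructor; eauto. split; [apply (off_A _ _ _ _ _ Hc)|].
  split; [exact Az0| split; [exact Hcz0|]]. intros z' Az' Hcz'.
  destruct (tri z0 z') as [H|[H|H]]; auto. exfalso. apply (Hmin z'); auto.
Qed.

Lemma fin_block {L} lt A : forall b : L, IsBase lt A b -> ~ (forall k, exists c, Off lt A b k c) ->
  exists m c, Off lt A b m c /\ ~ (exists c', Off lt A b (S m) c') /\
   forall k c', Off lt A b k c' -> k <= m.
Proof. intros b Hb Hn. apply not_all_ex_not in Hn. destruct Hn as [k0 Hk0].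
  assert (exists m c, Off lt A b m c /\ ~ (exists c', Off lt A b (S m) c')) as [m [c [Hc Hm]]].
  { induction k0 as [|k IH].
    - exfalso. apply Hk0. exists b. constructor; auto.
    - destruct (classic (exists c, Off lt A b k c)) as [[c Hc]|Hno].
      + exists k, c. auto.
      + apply IH; auto. }
  exists m, c. split; [exact Hc| split; [exact Hm|]]. intros k c' Hk.
  destruct (le_lt_dec k m); auto. exfalso. apply Hm. apply (off_down _ _ _ _ _ Hk). lia.
Qed.

Lemma noninf_unique {L} lt A (Hw : strict_well_order lt) : forall b1 b2 : L,
  IsBase lt A b1 -> ~ (forall k, exists c, Off lt A b1 k c) ->
  IsBase lt A b2 -> ~ (forall k, exists c, Off lt A b2 k c) -> b1 = b2.
Proof. intros b1 b2 B1 N1 B2 N2. pose proof Hw as [wf [tr [irr tri]]].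
  destruct (fin_block lt A b1 B1 N1) as [m1 [c1 [H1 [M1 _]]]].
  destruct (fin_block lt A b2 B2 N2) as [m2 [c2 [H2 [M2 _]]]].
  assert (c1 = c2).
  { destruct (tri c1 c2) as [H|[H|H]]; auto; exfalso.
    - apply (last_max lt A Hw b1 m1 c1 H1 M1 c2); auto. apply (off_A _ _ _ _ _ H2).
    - apply (last_max lt A Hw b2 m2 c2 H2 M2 c1); auto. apply (off_A _ _ _ _ _ H1). }
  subst. destruct (off_unique lt A Hw _ _ _ H1 _ _ H2); auto.
Qed.

Definition dsum {T} (X Y : T -> Prop) (p : bool * T) : Prop := if fst p then Y (snd p) else X (snd p).

Lemma doubling {L} (lt : L -> L -> Prop) : strict_well_order lt -> forall A : L -> Prop,
  (exists m, card_le A (fun n => n < m)) \/ card_le (dsum A A) A.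
Proof.
  intros Hw A.
  pose proof (off_unique lt A Hw) as OU. pose proof (off_func lt A Hw) as OF.
  pose proof (off_exists lt A Hw) as OE. pose proof (off_A lt A) as OA.
  pose proof (noninf_unique lt A Hw) as NU.
  destruct (classic (exists bs, IsBase lt A bs /\ forall k, exists c, Off lt A bs k c)) as [[bs [Bbs Ibs]]|Hno].
  - right.
    assert (HM : exists M, forall b k c, Off lt A b k c -> ~ (forall k, exists c, Off lt A b k c) -> k < M).
    { destruct (classic (exists bF, IsBase lt A bF /\ ~ forall k, exists c, Off lt A bF k c)) as [[bF [BF NF]]|HnF].
      - destruct (fin_block lt A bF BF NF) as [m [cl [Hcl [Hn Hb]]]]. exists (S m). intros b k c Hc Nb.
        assert (b = bF) by (apply NU; auto; apply (OA _ _ _ Hc)). subst.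
        specialize (Hb _ _ Hc). lia.
      - exists 0. intros b k c Hc Nb. exfalso. apply HnF. exists b. split; auto. apply (OA _ _ _ Hc). }
    destruct HM as [M HM].
    exists (fun (p : bool * L) (c : L) => exists b k, Off lt A b k (snd p) /\
       (((forall k, exists c, Off lt A b k c) /\ Off lt A b (2*k + (if fst p then 1 else 0) + 2*M) c) \/
        (~ (forall k, exists c, Off lt A b k c) /\ Off lt A bs (2*k + (if fst p then 1 else 0)) c))).
    split.
    + intros [i a] Ha. assert (Aa : A a) by (destruct i; exact Ha). simpl.
      destruct (OE a Aa) as [b [k Hk]].
      destruct (classic (forall k, exists c, Off lt A b k c)) as [Ib|Nb].
      * destruct (Ib (2*k + (if i then 1 else 0) + 2*M)) as [c Hc]. exists c.
        split; [apply (OA _ _ _ Hc)|]. exists b, k. auto.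
      * destruct (Ibs (2*k + (if i then 1 else 0))) as [c Hc]. exists c.
        split; [apply (OA _ _ _ Hc)|]. exists b, k. auto.
    + intros [i a] [i' a'] c _ _ [b [k [Hk H]]] [b' [k' [Hk' H']]]. simpl in *.
      destruct H as [[Ib Hc]|[Nb Hc]]; destruct H' as [[Ib' Hc']|[Nb' Hc']].
      * destruct (OU _ _ _ Hc _ _ Hc') as [<- E].
        assert (k = k' /\ i = i') as [<- <-] by (destruct i, i'; simpl in E; split; auto; lia).
        rewrite (OF _ _ _ Hk _ Hk'). reflexivity.
      * destruct (OU _ _ _ Hc _ _ Hc') as [_ E]. specialize (HM _ _ _ Hk' Nb').
        exfalso. destruct i, i'; simpl in E; lia.
      * destruct (OU _ _ _ Hc _ _ Hc') as [_ E]. specialize (HM _ _ _ Hk Nb).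
        exfalso. destruct i, i'; simpl in E; lia.
      * destruct (OU _ _ _ Hc _ _ Hc') as [_ E].
        assert (k = k' /\ i = i') as [<- <-] by (destruct i, i'; simpl in E; split; auto; lia).
        assert (b = b') as <- by (apply NU; auto; [apply (OA _ _ _ Hk)|apply (OA _ _ _ Hk')]).
        rewrite (OF _ _ _ Hk _ Hk'). reflexivity.
  - left. destruct (classic (exists a0, A a0)) as [[a0 Aa0]|HnA].
    + destruct (OE a0 Aa0) as [b0 [k0 H0]].
      assert (B0 : IsBase lt A b0) by apply (OA _ _ _ H0).
      assert (N0 : ~ (forall k, exists c, Off lt A b0 k c)) by (intro; apply Hno; eauto).
      destruct (fin_block lt A b0 B0 N0) as [m [cl [Hcl [Hn Hb]]]].
      exists (S m). exists (fun c n => Off lt A b0 n c). split.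
      * intros c Ac. destruct (OE c Ac) as [b [k Hk]].
        assert (Bb : IsBase lt A b) by apply (OA _ _ _ Hk).
        assert (b = b0) by (apply NU; auto; intro; apply Hno; eauto). subst.
        exists k. split; [specialize (Hb _ _ Hk); lia| exact Hk].
      * intros c c' n _ _ H1 H2. exact (OF _ _ _ H1 _ H2).
    + exists 0. exists (fun _ _ => False). split.
      * intros a Aa; exfalso; eauto.
      * intros; contradiction.
Qed.

Lemma split_aux {L} (lt : L -> L -> Prop) (Hw : strict_well_order lt) (W W1 W2 : L -> Prop) :
  (forall k, card_le (fun n => n < k) W) -> (forall w, W w -> W1 w \/ W2 w) ->
  card_le W2 W1 -> card_le W W1.
Proof.
  intros Hinf Hcov [R2 [T2 I2]].
  destruct (doubling lt Hw W1) as [[m [R1 [T1 I1]]]|Hd].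
  - exfalso. apply (php (2*m)). eapply card_le_trans; [apply Hinf|].
    exists (fun w n => (W1 w /\ R1 w n /\ n < m) \/
      (~ W1 w /\ W2 w /\ exists y n', W1 y /\ R2 w y /\ R1 y n' /\ n' < m /\ n = n' + m)).
    split.
    + intros w Ww. destruct (classic (W1 w)) as [H1|H1].
      * destruct (T1 w H1) as [n [Hn Rn]]. exists n. split; [lia|]. left; auto.
      * assert (H : W2 w) by (destruct (Hcov w Ww); tauto).
        destruct (T2 w H) as [y [Wy Ry]]. destruct (T1 y Wy) as [n' [Hn' Rn']].
        exists (n'+m). split; [lia|]. right. split; auto. split; auto. exists y, n'. auto.
    + intros w w' n Ww Ww' H H'.
      destruct H as [(A1&B1&C1)|(A1&B1&y&n1&D1&E1&F1&G1&->)];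
      destruct H' as [(A2&B2&C2)|(A2&B2&y'&n2&D2&E2&F2&G2&E)].
      * apply (I1 w w' n); auto.
      * lia.
      * lia.
      * assert (n1 = n2) by lia. subst n2.
        assert (y = y') by (apply (I1 y y' n1); auto). subst y'.
        apply (I2 w w' y); auto.
  - eapply card_le_trans; [|exact Hd].
    exists (fun w (p : bool * L) => (W1 w /\ fst p = false /\ snd p = w) \/
       (~ W1 w /\ W2 w /\ fst p = true /\ R2 w (snd p) /\ W1 (snd p))).
    split.
    + intros w Ww. destruct (classic (W1 w)) as [H1|H1].
      * exists (false, w). simpl. split; auto.
      * assert (H : W2 w) by (destruct (Hcov w Ww); tauto).
        destruct (T2 w H) as [y [Wy Ry]]. exists (true, y). simpl. split; auto. right; auto.
    + intros w w' [i y] _ _ H H'; simpl in *.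
      destruct H as [(A1&B1&C1)|(A1&B1&C1&D1&E1)];
      destruct H' as [(A2&B2&C2)|(A2&B2&C2&D2&E2)]; subst; try congruence.
      apply (I2 w w' y); auto.
Qed.

Lemma split_lem {L} (lt : L -> L -> Prop) (Hw : strict_well_order lt) (W W1 W2 : L -> Prop) :
  (forall k, card_le (fun n => n < k) W) -> (forall w, W w -> W1 w \/ W2 w) ->
  card_le W W1 \/ card_le W W2.
Proof.
  intros Hinf Hcov. destruct (comparable lt Hw W1 W2) as [H|H].
  - right. apply (split_aux lt Hw W W2 W1); auto. intros w Ww; destruct (Hcov w Ww); auto.
  - left. apply (split_aux lt Hw W W1 W2); auto.
Qed.

Lemma union_small {L} (lt : L -> L -> Prop) (Hw : strict_well_order lt) (W u v : L -> Prop) :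
  (forall k, card_le (fun n => n < k) W) -> card_lt u W -> card_lt v W ->
  card_lt (fun a => u a \/ v a) W.
Proof.
  intros Hinf [Hu Hnu] [Hv Hnv]. split.
  - destruct (doubling lt Hw W) as [[m Hm]|Hd].
    + exfalso. apply (php m). eapply card_le_trans; [apply Hinf|exact Hm].
    + eapply card_le_trans; [|exact Hd]. destruct Hu as [Ru [Tu Iu]], Hv as [Rv [Tv Iv]].
      exists (fun a (p : bool * L) => (u a /\ fst p = false /\ Ru a (snd p) /\ W (snd p)) \/
         (~ u a /\ v a /\ fst p = true /\ Rv a (snd p) /\ W (snd p))).
      split.
      * intros a Ha. destruct (classic (u a)) as [H1|H1].
        -- destruct (Tu a H1) as [w [Ww Rw]]. exists (false, w). simpl. split; auto.
        -- assert (H : v a) by tauto. destruct (Tv a H) as [w [Ww Rw]].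
           exists (true, w). simpl. split; auto. right; auto.
      * intros a a' [i y] _ _ H H'; simpl in *.
        destruct H as [(A1&B1&C1&D1)|(A1&B1&C1&D1&E1)];
        destruct H' as [(A2&B2&C2&D2)|(A2&B2&C2&D2&E2)]; subst; try congruence.
        -- apply (Iu a a' y); auto.
        -- apply (Iv a a' y); auto.
  - intros [R [T I]].
    assert (Hcov : forall w, W w -> (fun w => W w /\ exists a, u a /\ R w a) w \/
                                   (fun w => W w /\ exists a, v a /\ R w a) w).
    { intros w Ww. destruct (T w Ww) as [a [[ua|va] Ra]]; [left|right]; split; eauto. }
    destruct (split_lem lt Hw W _ _ Hinf Hcov) as [H|H].
    + apply Hnu. eapply card_le_trans; [exact H|].
      exists (fun w a => u a /\ R w a). split.
      * intros w [Ww [a [ua Ra]]]. exists a; auto.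
      * intros w w' a [Ww _] [Ww' _] [_ Ra] [_ Ra']. apply (I w w' a); auto.
    + apply Hnv. eapply card_le_trans; [exact H|].
      exists (fun w a => v a /\ R w a). split.
      * intros w [Ww [a [va Ra]]]. exists a; auto.
      * intros w w' a [Ww _] [Ww' _] [_ Ra] [_ Ra']. apply (I w w' a); auto.
Qed.

Theorem lemma2p4 (L : Type) (lt : L -> L -> Prop) (K : L -> Prop)
  (C : (L -> Prop) -> Prop) (f : (L -> Prop) -> (L -> Prop)) :
  strict_well_order lt ->
  is_cardinal_order lt ->
  inaccessible lt K ->
  jech_club K C ->
  (forall z, Pkl K z -> subset z (f z) /\ ~ subset (f z) z /\ C (f z)) ->
  (forall x, Cf K f x -> C x) /\ NSSstar K C.
Proof.
  intros Hw _ Hin Hclub Hf.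
  destruct Hin as [_ [_ [_ [_ Hstrong]]]].
  destruct Hclub as [CPkl [_ Cclosed]].
  assert (Part1 : forall x, Cf K f x -> C x).
  { intros x [Px [[a0 [xa0 Ka0]] Hcl]].
    assert (W0 : capK K x a0) by (split; auto).
    assert (PklOf : forall y, Pkx K x y -> Pkl K y).
    { intros y [Hsub [Hle Hnle]]. destruct Px as [Hxle Hxnle]. split.
      - eapply card_le_trans; [exact Hle|]. eapply card_le_trans; [|exact Hxle].
        apply card_le_sub. intros a [xa _]; exact xa.
      - intro HK. apply Hxnle. eapply card_le_trans; [exact HK|]. apply card_le_sub. exact Hsub. }
    assert (Pempty : Pkx K x (fun _ => False)).
    { split; [intros a []|]. split.
      - exists (fun _ _ => False); split; intros; contradiction.
      - intros [R [T _]]. destruct (T a0 W0) as [b [[] _]]. }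
    set (it := fun k => Nat.iter k f (fun _ => False)).
    assert (Pit : forall k, Pkx K x (it k)).
    { induction k as [|k IH]; [exact Pempty|]. apply (Hcl (it k) IH). }
    assert (Sit : forall k, card_le (fun n => n < k) (it k)).
    { induction k as [|k IH].
      - exists (fun _ _ => False). split; [intros; lia| intros; contradiction].
      - destruct (Hf (it k) (PklOf _ (Pit k))) as [Hs [Hns _]].
        assert (He : exists e, f (it k) e /\ ~ it k e).
        { apply NNPP; intro Hc. apply Hns. intros e Fe. apply NNPP; intro Ne. apply Hc; eauto. }
        destruct He as [e [Fe Ne]].
        destruct IH as [R [T I]].
        exists (fun n a => (n < k /\ R n a /\ it k a) \/ (n = k /\ a = e)). split.
        + intros n Hn. destruct (Nat.eq_dec n k) as [->|Hnk].
          * exists e. split; [exact Fe| right; auto].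
          * destruct (T n) as [a [Ia Ra]]; [lia|]. exists a. split; [apply Hs; exact Ia| left; repeat split; auto; lia].
        + intros n n' a Hn Hn' H H'.
          destruct H as [(A1&B1&C1)|(A1&->)]; destruct H' as [(A2&B2&C2)|(A2&E2)]; subst; try lia.
          * apply (I n n' a); auto.
          * contradiction.
          * contradiction. }
    assert (Winf : forall k, card_le (fun n => n < k) (capK K x)).
    { intro k. eapply card_le_trans; [apply Sit|]. apply (Pit k). }
    set (D := fun d => exists y, Pkx K x y /\ d = f y).
    assert (Psing : forall a, x a -> Pkx K x (fun z => z = a)).
    { intros a xa. split; [intros z ->; exact xa|]. split.
      - exists (fun _ w => w = a0). split.
        + intros z _. exists a0. split; auto.
        + intros z z' w Hz Hz' _ _. subst; reflexivity.
      - intros [R [T I]]. destruct (Winf 2) as [R2 [T2 I2]].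
        destruct (T2 0) as [w0 [Ww0 R0]]; [lia|]. destruct (T2 1) as [w1 [Ww1 R1]]; [lia|].
        destruct (T w0 Ww0) as [z0 [Ez0 Rz0]]. destruct (T w1 Ww1) as [z1 [Ez1 Rz1]].
        subst z0 z1. assert (w0 = w1) by (apply (I w0 w1 a); auto). subst w1.
        assert (0 = 1) by (apply (I2 0 1 w0); auto). discriminate. }
    assert (HU : bigunion D = x).
    { apply functional_extensionality; intro a; apply propositional_extensionality; split.
      - intros [d [[y [Py ->]] fa]]. destruct (Hcl y Py) as [Hs _]. apply Hs; auto.
      - intro xa. exists (f (fun z => z = a)). split.
        + exists (fun z => z = a); split; [apply Psing; exact xa | reflexivity].
        + apply (proj1 (Hf _ (PklOf _ (Psing a xa)))). reflexivity. }
    rewrite <- HU. apply Cclosed.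
    - intros d [y [Py ->]]. apply (Hf y (PklOf y Py)).
    - split.
      + exists (f (fun _ => False)). exists (fun _ => False). auto.
      + intros d1 d2 [y1 [P1 ->]] [y2 [P2 ->]].
        pose proof (Hcl y1 P1) as [S1 L1]. pose proof (Hcl y2 P2) as [S2 L2].
        assert (Py : Pkx K x (fun a => f y1 a \/ f y2 a)).
        { split.
          - intros a [Ha|Ha]; [apply S1|apply S2]; exact Ha.
          - apply (union_small lt Hw); auto. }
        destruct (Hf _ (PklOf _ Py)) as [Hs _].
        exists (f (fun a => f y1 a \/ f y2 a)). split; [exists (fun a => f y1 a \/ f y2 a); auto|].
        split; intros a Ha; apply Hs; auto.
    - pose proof Px as [[R0 [T0 I0]] Hxn].
      set (g := fun a => epsilon (inhabits a0) (fun k => K k /\ R0 a k)).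
      assert (Hg : forall a, x a -> K (g a) /\ R0 a (g a)).
      { intros a xa. unfold g. apply epsilon_spec. destruct (T0 a xa) as [k Hk]. eauto. }
      assert (Ginj : forall a a', x a -> x a' -> g a = g a' -> a = a').
      { intros a a' xa xa' E. destruct (Hg a xa) as [_ Ra]. destruct (Hg a' xa') as [_ Ra'].
        rewrite E in Ra. apply (I0 a a' (g a')); auto. }
      set (Aset := fun k => exists a, x a /\ g a = k).
      assert (HA : card_lt Aset K).
      { split.
        - apply card_le_sub. intros k [a [xa <-]]. apply (Hg a xa).
        - intro HK. apply Hxn. eapply card_le_trans; [exact HK|].
          exists (fun k a => x a /\ g a = k). split.
          + intros k [a [xa Ea]]. exists a. auto.
          + intros k k' a _ _ [_ E1] [_ E2]. congruence. }
      assert (HAsub : subset Aset K) by (intros k [a [xa <-]]; apply (Hg a xa)).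
      destruct (Hstrong Aset HAsub HA) as [HP HPn].
      assert (DP : card_le D (fun S => subset S Aset)).
      { exists (fun d S => exists y, Pkx K x y /\ d = f y /\ forall k, S k <-> exists a, y a /\ g a = k).
        split.
        - intros d [y [Py ->]]. exists (fun k => exists a, y a /\ g a = k). split.
          + intros k [a [ya <-]]. exists a. split; auto. apply (proj1 Py). exact ya.
          + exists y. split; auto. split; auto. intro; tauto.
        - intros d d' S _ _ [y [Py [-> Hy]]] [y' [Py' [-> Hy']]].
          f_equal. apply functional_extensionality; intro a; apply propositional_extensionality.
          split; intro Ha.
          + assert (xa : x a) by (apply (proj1 Py); exact Ha).
            destruct (proj1 (Hy' (g a)) (proj2 (Hy (g a)) (ex_intro _ a (conj Ha eq_refl)))) as [a' [ya' E]].
            assert (xa' : x a') by (apply (proj1 Py'); exact ya').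
            rewrite <- (Ginj a' a xa' xa E). exact ya'.
          + assert (xa : x a) by (apply (proj1 Py'); exact Ha).
            destruct (proj1 (Hy (g a)) (proj2 (Hy' (g a)) (ex_intro _ a (conj Ha eq_refl)))) as [a' [ya' E]].
            assert (xa' : x a') by (apply (proj1 Py); exact ya').
            rewrite <- (Ginj a' a xa' xa E). exact ya'. }
      split.
      + eapply card_le_trans; [exact DP|exact HP].
      + intro HK. apply HPn. eapply card_le_trans; [exact HK|exact DP]. }
  split; [exact Part1|].
  split; [exact CPkl|]. exists f. split.
  - intros z Pz. apply CPkl. apply (Hf z Pz).
  - exact Part1.
Qed.
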